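(* Let $d\in\mathbb N$, $D=[-\frac12,\frac12]^d$ and $\Phi:\mathbb R^d\to[0,\infty)$. Assume there exists $x_\star$ in the interior of $D$ such that for every $r>0$, $\inf_{x\in D,\|x-x_\star\|>r}\Phi(x)-\Phi(x_\star)>0$; $\Phi$ is $(4d+3)$ times continuously differentiable in a neighborhood of $x_\star$ with $H_\star=\nabla^2\Phi(x_\star)$ positive definite; and $\Phi$ is $d$ times continuously differentiable on $\mathbb R^d$. Write $H_\star=QDQ^\top$ with $Q$ orthogonal and $D=\mathrm{diag}(\lambda_1,\dots,\lambda_d)$, $\lambda_i>0$. Fix $\tau\in(0,1)$ and set $g_n(x)=x_\star+\sqrt{2|\ln\tau|/n}\,QD^{-1/2}x$ and $\Theta_n(x)=\exp(-n\Phi(x))$. Then, with the norm $\|\cdot\|_\gamma$ defined below (for any positive POD weights $\gamma$), $\|\Theta_n\circ g_n\|_\gamma\in\mathcal O(1)$ as $n\to\infty$.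
   Context: POD weights: $\gamma_\nu=\alpha_{|\nu|}\prod_{j\in\nu}\beta_j$ for $\nu\subseteq\{1,\dots,d\}$ with $\alpha_0=\alpha_1=1$, $\alpha_2,\ldots>0$, $\beta_1\ge\beta_2\ge\dots>0$. For $F:[-\frac12,\frac12]^d\to\mathbb R$ with continuous mixed first-order derivatives, $$\|F\|_\gamma^2=\sum_{\nu\subseteq\{1,\dots,d\}}\frac1{\gamma_\nu}\int_{[-\frac12,\frac12]^{|\nu|}}\Big(\int_{[-\frac12,\frac12]^{d-|\nu|}}\frac{\partial^{|\nu|}F}{\partial x_\nu}(x)\,dx_{\{1,\dots,d\}\setminus\nu}\Big)^2dx_\nu.$$ *)

(* Defs.v *)
From HB Require Import structures.
From mathcomp Require Import all_boot all_order all_algebra.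
From mathcomp Require Import all_classical all_reals all_analysis.
Set Implicit Arguments. Unset Strict Implicit. Unset Printing Implicit Defensive.
Import Order.TTheory GRing.Theory Num.Theory numFieldNormedType.Exports.
Local Open Scope classical_set_scope.
Local Open Scope ring_scope.

Section Defs.
Variables (R : realType) (d : nat).
Implicit Types (f : 'rV[R]_d -> R) (x : 'rV[R]_d).

Definition ev (j : 'I_d) : 'rV[R]_d := \row_k (if k == j then 1 else 0).

Definition partial (j : 'I_d) f : 'rV[R]_d -> R := fun x => 'D_(ev j) f x.

Definition iter_partial (s : seq 'I_d) f : 'rV[R]_d -> R :=
  foldr (fun j g => partial j g) f s.

Definition Ck (k : nat) (U : set 'rV[R]_d) f : Prop :=
  forall s : seq 'I_d, forall x, U x ->
    ((size s < k)%N -> forall j, derivable (iter_partial s f) x (ev j)) /\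
    ((size s <= k)%N -> {for x, continuous (iter_partial s f)}).

Definition enorm x : R := Num.sqrt (\sum_(i < d) (x 0 i) ^+ 2).

Definition upd x (j : 'I_d) (t : R) : 'rV[R]_d :=
  \row_k (if k == j then t else x 0 k).

Fixpoint cint (s : seq 'I_d) f x : R :=
  match s with
  | [::] => f x
  | j :: s' => Rintegral (@lebesgue_measure R) `[(- (1/2))%R, (1/2)%R]%classic
                 (fun t => cint s' f (upd x j t))
  end.

Definition pod_weights (alpha : nat -> R) (beta : 'I_d -> R) : Prop :=
  alpha 0%N = 1 /\ alpha 1%N = 1 /\ (forall k, 0 < alpha k) /\
  (forall j, 0 < beta j) /\ (forall i j : 'I_d, (i <= j)%N -> beta j <= beta i).

Definition gammaw (alpha : nat -> R) (beta : 'I_d -> R) (nu : {set 'I_d}) : R :=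
  alpha #|nu| * \prod_(j in nu) beta j.

Definition gamma_norm (alpha : nat -> R) (beta : 'I_d -> R) f : R :=
  Num.sqrt (\sum_(nu : {set 'I_d})
     (gammaw alpha beta nu)^-1 *
       cint (enum nu)
         (fun y => (cint (enum (~: nu)) (iter_partial (enum nu) f) y) ^+ 2) 0).

Definition hessian f x : 'M[R]_d := \matrix_(i, j) iter_partial [:: i; j] f x.

End Defs.

(* Main.v *)
Require Import Defs.
From HB Require Import structures.
From mathcomp Require Import all_boot all_order all_algebra.
From mathcomp Require Import all_classical all_reals all_analysis.
From mathcomp Require Import ring lra.
From mathcomp Require Import measurable_realfun.
Import Order.TTheory GRing.Theory Num.Theory numFieldNormedType.Exports.
Local Open Scope classical_set_scope.
Local Open Scope ring_scope.
Set Implicit Arguments. Unset Strict Implicit. Unset Printing Implicit Defensive.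
Section S.
Variables (R : realType) (d : nat).
Lemma entry_le_norm (x : 'rV[R]_d) i : `|x 0 i| <= `|x|.
Proof.
change (`|x|) with (mx_norm x); rewrite mx_normrE.
exact: (le_bigmax_cond _ (fun ij => `|x ij.1 ij.2|) (isT : predT (0, i))).
Qed.
Lemma norm_le_entries (x : 'rV[R]_d) r : 0 <= r -> (forall i, `|x 0 i| <= r) -> `|x| <= r.
Proof.
move=> r0 H; change (`|x|) with (mx_norm x); rewrite mx_normrE.
apply: bigmax_le => // -[i j] _ /=; by rewrite ord1.
Qed.
End S.
Section W.
Variables (R : realType) (d : nat).
Definition B : set 'rV[R]_d := [set x | `|x| < 1].

Lemma B_near x : B x -> \forall z \near x, B z.
Proof.
move=> Bx.
have : ball (0 : 'rV[R]_d) 1 x by rewrite mx_norm_ball /ball_ /= sub0r normrN.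
move=> /(@ball_open R _ (0 : 'rV[R]_d) 1) H.
by apply: filterS H => z; rewrite mx_norm_ball /ball_ /= sub0r normrN.
Qed.

Definition W0 (u : nat -> 'rV[R]_d -> R) : Prop :=
  exists C N, forall n, (N <= n)%N -> forall x, B x -> `|u n x| <= C.

Fixpoint W (m : nat) (u : nat -> 'rV[R]_d -> R) : Prop :=
  match m with
  | 0 => W0 u
  | m'.+1 => W0 u /\
      (exists N, forall n, (N <= n)%N -> forall x, B x -> forall j, derivable (u n) x (ev R j)) /\
      forall j, W m' (fun n => partial j (u n))
  end.

Definition eqB (u v : nat -> 'rV[R]_d -> R) :=
  exists N, forall n, (N <= n)%N -> forall x, B x -> u n x = v n x.

Lemma W0_ext u v : eqB u v -> W0 u -> W0 v.
Proof.
move=> [N1 e] [C [N0 H]]; exists C, (maxn N0 N1) => n; rewrite geq_max => /andP[h0 h1] x Bx.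
by rewrite -e // H.
Qed.

Lemma W_ext m u v : eqB u v -> W m u -> W m v.
Proof.
elim: m u v => [|m IH] u v e; first exact: W0_ext.
have [N1 e'] := e.
move=> [w0 [[N2 D] P]]; split; first exact: W0_ext w0.
split.
  exists (maxn N1 N2) => n; rewrite geq_max => /andP[h1 h2] x Bx j.
  apply: near_eq_derivable (D n h2 x Bx j).
  by apply: filterS (B_near Bx) => z Bz; rewrite e'.
move=> j; apply: IH (P j); exists N1 => n h1 x Bx.
rewrite /partial; apply: near_eq_derive.
by apply: filterS (B_near Bx) => z Bz; rewrite e'.
Qed.

Lemma W_mono m u : W m.+1 u -> W m u.
Proof.
elim: m u => [|m IH] u; first by case.
move=> [w0 [D P]]; split => //; split => // j.
exact: IH.
Qed.

Lemma W_W0 m u : W m u -> W0 u.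
Proof. by case: m => [|m] //; case. Qed.

Lemma W_cst m (c : R) : W m (fun _ _ => c).
Proof.
elim: m c => [|m IH] c.
  by exists `|c|, 0%N.
split; first by exists `|c|, 0%N.
split.
  exists 0%N => n _ x _ j; exact: derivable_cst.
move=> j; apply: W_ext (IH 0); exists 0%N => n _ x _.
by rewrite /partial derive_cst.
Qed.

Lemma W0_add u v : W0 u -> W0 v -> W0 (fun n x => u n x + v n x).
Proof.
move=> [C1 [N1 H1]] [C2 [N2 H2]]; exists (C1 + C2), (maxn N1 N2) => n.
rewrite geq_max => /andP[a b] x Bx.
by rewrite (le_trans (ler_normD _ _)) // lerD ?H1 ?H2.
Qed.

Lemma W0_mul u v : W0 u -> W0 v -> W0 (fun n x => u n x * v n x).
Proof.
move=> [C1 [N1 H1]] [C2 [N2 H2]]; exists (C1 * C2), (maxn N1 N2) => n.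
rewrite geq_max => /andP[a b] x Bx.
rewrite normrM ler_pM //; by [rewrite H1|rewrite H2].
Qed.

Lemma W_add m u v : W m u -> W m v -> W m (fun n x => u n x + v n x).
Proof.
elim: m u v => [|m IH] u v; first exact: W0_add.
move=> [w1 [[N1 D1] P1]] [w2 [[N2 D2] P2]]; split; first exact: W0_add.
split.
  exists (maxn N1 N2) => n; rewrite geq_max => /andP[a b] x Bx j.
  exact: (derivableD (D1 n a x Bx j) (D2 n b x Bx j)).
move=> j; apply: W_ext (IH _ _ (P1 j) (P2 j)).
exists (maxn N1 N2) => n; rewrite geq_max => /andP[a b] x Bx.
rewrite /partial -deriveD //; [exact: D1|exact: D2].
Qed.

Lemma W_mul m u v : W m u -> W m v -> W m (fun n x => u n x * v n x).
Proof.
elim: m u v => [|m IH] u v; first exact: W0_mul.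
move=> [w1 [[N1 D1] P1]] [w2 [[N2 D2] P2]]; split; first exact: W0_mul.
split.
  exists (maxn N1 N2) => n; rewrite geq_max => /andP[a b] x Bx j.
  exact: (derivableM (D1 n a x Bx j) (D2 n b x Bx j)).
have Wu : W m u by apply: W_mono; split => //; split => //; exists N1.
have Wv : W m v by apply: W_mono; split => //; split => //; exists N2.
move=> j.
have := W_add (IH _ _ Wu (P2 j)) (IH _ _ Wv (P1 j)).
apply: W_ext; exists (maxn N1 N2) => n; rewrite geq_max => /andP[a b] x Bx.
rewrite /partial.
have -> : (fun x0 => u n x0 * v n x0) = (u n * v n) by [].
rewrite deriveM //; [exact: D1|exact: D2].
Qed.

Lemma W_sum m (I : Type) (r : seq I) (F : I -> nat -> 'rV[R]_d -> R) :
  (forall i, W m (F i)) -> W m (fun n x => \sum_(i <- r) F i n x).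
Proof.
move=> H; elim: r => [|a r IHr].
  by apply: W_ext (W_cst m 0); exists 0%N => n _ x _; rewrite big_nil.
apply: W_ext (W_add (H a) IHr); exists 0%N => n _ x _; by rewrite big_cons.
Qed.

Lemma W_iter m u s : W m u -> (size s <= m)%N ->
  W0 (fun n => iter_partial s (u n)).
Proof.
elim/last_ind: s m u => [|s j IH] m u.
  by move=> /W_W0.
case: m => [|m]; first by rewrite size_rcons.
move=> [_ [_ P]]; rewrite size_rcons ltnS => hs.
have := IH _ _ (P j) hs.
apply: W0_ext; exists 0%N => n _ x _.
by rewrite /iter_partial foldr_rcons.
Qed.

End W.
Section D.
Variables (R : realType) (d : nat).
Implicit Types (f : 'rV[R]_d -> R).

Lemma quot_line f a w t :
  (fun h : R => h^-1 *: ((f \o shift (t *: w + a)) (h *: w) - f (t *: w + a))) =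
  (fun h : R => h^-1 *: (((fun s : R => f (s *: w + a)) \o shift t) (h *: 1) -
                          (fun s : R => f (s *: w + a)) t)).
Proof.
apply: funext => h /=; congr (_ *: (f _ - _)).
by rewrite [h *: 1]mulr1 scalerDl addrA.
Qed.

Lemma derive_line f a w t :
  'D_w f (t *: w + a) = 'D_1 (fun s : R => f (s *: w + a)) t.
Proof. by rewrite /derive quot_line. Qed.

Lemma derivable_line f a w t :
  derivable f (t *: w + a) w <-> derivable (fun s : R => f (s *: w + a)) t 1.
Proof. by rewrite /derivable quot_line. Qed.

Lemma derive_line0 f a w : 'D_w f a = 'D_1 (fun s : R => f (s *: w + a)) 0.
Proof. by rewrite -derive_line scale0r add0r. Qed.

Lemma derivable_line0 f a w :
  derivable f a w <-> derivable (fun s : R => f (s *: w + a)) 0 1.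
Proof. by rewrite -derivable_line scale0r add0r. Qed.

Lemma derive_exp f x v : derivable f x v ->
  derivable (fun y => expR (f y)) x v /\
  'D_v (fun y => expR (f y)) x = expR (f x) * 'D_v f x.
Proof.
move=> /derivable_line0 df.
have dg : derivable (fun s : R => expR (f (s *: v + x))) 0 1.
  apply/derivable1_diffP; apply: (@differentiable_comp _ _ _ _ (fun s : R => f (s *: v + x)) expR).
    exact/derivable1_diffP.
  exact/derivable1_diffP/(@derivable_expR R _).
split; first exact/derivable_line0.
rewrite derive_line0 (derive_line0 f).
have := @derive1_comp R (fun s : R => f (s *: v + x)) expR 0 df (@derivable_expR R _).
have E : 'D_1 expR (f x) = expR (f x) :> R by apply: derive_val.
by rewrite !derive1E /= scale0r add0r E => <-.
Qed.

Lemma quot_aff f (p : 'rV[R]_d) (c : R) (M : 'M[R]_d) x v :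
  (fun h : R => h^-1 *: (((fun y => f (p + c *: (y *m M))) \o shift x) (h *: v) -
       f (p + c *: (x *m M)))) =
  (fun h : R => h^-1 *: ((f \o shift (p + c *: (x *m M))) (h *: (c *: (v *m M))) -
       f (p + c *: (x *m M)))).
Proof.
apply: funext => h /=; congr (_ *: (f _ - _)).
rewrite mulmxDl -scalemxAl scalerDr !scalerA [c * h]mulrC.
by rewrite addrCA addrC.
Qed.

Lemma derive_aff f (p : 'rV[R]_d) (c : R) (M : 'M[R]_d) (x v : 'rV[R]_d) :
  'D_v (fun y => f (p + c *: (y *m M))) x = 'D_(c *: (v *m M)) f (p + c *: (x *m M)).
Proof. by rewrite /derive quot_aff. Qed.

Lemma derivable_aff f (p : 'rV[R]_d) (c : R) (M : 'M[R]_d) (x v : 'rV[R]_d) :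
  derivable (fun y => f (p + c *: (y *m M))) x v <->
  derivable f (p + c *: (x *m M)) (c *: (v *m M)).
Proof. by rewrite /derivable quot_aff. Qed.

Lemma LMVT f (a w : 'rV[R]_d) (b : R) (D : R -> R) :
  (forall s, `|s| <= `|b| -> is_derive (s *: w + a) w f (D s)) ->
  exists c, `|c| <= `|b| /\ f (b *: w + a) - f a = D c * b.
Proof.
move=> H.
pose phi := fun s => f (s *: w + a).
have Hphi (s : R) : `|s| <= `|b| -> is_derive s (1 : R) phi (D s).
  move=> hs; have [d1 d2] := H s hs.
  apply: DeriveDef; first exact/derivable_line.
  by rewrite -derive_line.
have fa : f a = phi 0 by rewrite /phi scale0r add0r.
rewrite fa; case: (leP 0 b) => b0.
  have := @MVT_segment R phi D 0 b b0.
  case.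
  - move=> s; rewrite in_itv /= => /andP[s0 sb]; apply: Hphi.
    by rewrite (ger0_norm (ltW s0)) (ger0_norm b0) ltW.
  - apply: derivable_within_continuous => s; rewrite in_itv /= => /andP[s0 sb].
    have [] := Hphi s _ => //.
    by rewrite !ger0_norm.
  move=> c; rewrite in_itv /= => /andP[c0 cb] ->; exists c; split.
    by rewrite !ger0_norm.
  by rewrite subr0.
have := @MVT_segment R phi D b 0 (ltW b0).
case.
- move=> s; rewrite in_itv /= => /andP[s0 sb]; apply: Hphi.
  by rewrite !ltr0_norm // lerN2 ltW.
- apply: derivable_within_continuous => s; rewrite in_itv /= => /andP[s0 sb].
  have [] := Hphi s _ => //.
  rewrite (ltr0_norm b0); case: (leP 0 s) => s0'.
    by rewrite ger0_norm // (le_trans sb) // oppr_ge0 ltW.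
  by rewrite ltr0_norm // lerN2.
move=> c; rewrite in_itv /= => /andP[c0 cb] e; exists c; split.
  rewrite (ltr0_norm b0); case: (leP 0 c) => c0'.
    by rewrite ger0_norm // (le_trans cb) // oppr_ge0 ltW.
  by rewrite ltr0_norm // lerN2.
apply: (@oppr_inj _); rewrite opprB e; ring.
Qed.

End D.
Section L1.
Variables (R : realType) (d : nat).
Implicit Types (f : 'rV[R]_d -> R).

Definition vk (v : 'rV[R]_d) (k : nat) : 'rV[R]_d :=
  \row_i (if (i < k)%N then v 0 i else 0).

Lemma vk0 (v : 'rV[R]_d) : vk v 0 = 0.
Proof. by apply/rowP => i; rewrite !mxE. Qed.

Lemma vkd (v : 'rV[R]_d) : vk v d = v.
Proof. by apply/rowP => i; rewrite !mxE ltn_ord. Qed.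

Lemma vkS (v : 'rV[R]_d) (t : R) (y : 'rV[R]_d) (k : 'I_d) :
  t *: vk v k.+1 + y = (t * v 0 k) *: ev R k + (t *: vk v k + y).
Proof.
apply/rowP => i; rewrite !mxE.
have [->|ne] := eqVneq i k.
  by rewrite ltnSn ltnn; ring.
have ne' : (nat_of_ord i == k) = false by apply/negbTE.
by rewrite ltnS leq_eqVlt ne' /=; ring.
Qed.

Lemma vk_entry (v : 'rV[R]_d) (t s : R) (k : 'I_d) :
  `|s| <= `|t * v 0 k| -> `|s *: ev R k + t *: vk v k| <= `|t| * `|v|.
Proof.
move=> hs; apply: norm_le_entries; first by rewrite mulr_ge0.
move=> i; rewrite !mxE.
have [->|ne] := eqVneq i k.
  rewrite ?eqxx ltnn mulr0 addr0 mulr1 (le_trans hs) // normrM.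
  by rewrite ler_pM // entry_le_norm.
rewrite mulr0 add0r; case: ifP => _.
  by rewrite normrM ler_pM // entry_le_norm.
by rewrite mulr0 normr0 mulr_ge0.
Qed.

Lemma L1 f (y : 'rV[R]_d) :
  (\forall z \near y, forall i, derivable f z (ev R i)) ->
  (forall i, {for y, continuous (partial i f)}) ->
  forall v, is_derive y v f (\sum_i v 0 i * partial i f y).
Proof.
move=> H1 H2 v.
set l := \sum_i _.
suff cv : (fun h : R => h^-1 *: ((f \o shift y) (h *: v) - f y)) @ 0^' --> l.
  apply: DeriveDef; first by apply/cvg_ex; exists l.
  exact: cvg_lim cv.
apply/cvgrPdist_le => e e0.
pose e' := e / (d%:R * `|v| + 1).
have den0 : 0 < d%:R * `|v| + 1 by rewrite ltr_wpDl // mulr_ge0.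
have e'0 : 0 < e' by rewrite divr_gt0.
have H3 : \forall z \near y, (forall i, derivable f z (ev R i)) /\
   (forall i, `|partial i f y - partial i f z| <= e').
  have H4 : \forall z \near y, forall i, `|partial i f y - partial i f z| <= e'.
    apply: (@filter_forall _ 'I_d (fun i z => `|partial i f y - partial i f z| <= e') (nbhs y) _) => i.
    have := H2 i.
    move=> /(@cvgrPdist_le _ _ _ _ (nbhs_filter y)) /(_ e' e'0).
    done.
  by apply: filterS2 H1 H4 => z a b; split.
have [del del0 Hdel] := (nbhs_ballP _ _).1 H3.
have Hd z : `|y - z| < del -> (forall i, derivable f z (ev R i)) /\
   (forall i, `|partial i f y - partial i f z| <= e').
  by move=> hz; apply: Hdel; rewrite mx_norm_ball /ball_ /=.
pose del' := del / (`|v| + 1).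
have v10 : 0 < `|v| + 1 by rewrite ltr_wpDl.
have del'0 : 0 < del' by rewrite divr_gt0.
near=> t.
have tn0 : t != 0 by near: t; exact: nbhs_dnbhs_neq.
have ts : `|t| < del' by near: t; exact: dnbhs0_lt.
have tvd : `|t| * `|v| < del.
  apply: (le_lt_trans (y := `|t| * (`|v| + 1))).
    by rewrite ler_pM // lerDl.
  have -> : del = del' * (`|v| + 1) by rewrite /del' divfK // gt_eqF.
  by rewrite ltr_pM2r.
pose z k := t *: vk v k + y.
pose D (k : 'I_d) s := partial k f (s *: ev R k + z k).
have Hk : forall k : 'I_d, exists c, `|c| <= `|t * v 0 k| /\
    (`|partial k f y - D k c| <= e' /\
     f (z k.+1) - f (z k) = D k c * (t * v 0 k)).
  move=> k.
  have pt s : `|s| <= `|t * v 0 k| -> `|y - (s *: ev R k + z k)| < del.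
    move=> hs; have -> : y - (s *: ev R k + z k) = - (s *: ev R k + t *: vk v k).
      by apply/rowP => i; rewrite /z !mxE; ring.
    rewrite normrN.
    exact: le_lt_trans (vk_entry hs) tvd.
  have [c [hc e1]] := @LMVT R d f (z k) (ev R k) (t * v 0 k) (D k)
    (fun s hs => derivableP ((Hd _ (pt s hs)).1 k)).
  exists c; split => //; split; first exact: (Hd _ (pt c hc)).2.
  by rewrite -e1 /z vkS.
have [c Hc] := choice Hk.
have -> : t^-1 *: ((f \o shift y) (t *: v) - f y) = \sum_k v 0 k * D k (c k).
  have -> : (f \o shift y) (t *: v) - f y = f (z d) - f (z 0%N).
    by rewrite /z vk0 vkd scaler0 add0r.
  rewrite -(@telescope_sumr _ 0 d (fun k => f (z k))) // big_mkord scaler_sumr; apply: eq_bigr => k _.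
  rewrite (Hc k).2.2 /GRing.scale /=; field.
  exact: tn0.
rewrite /l -sumrB.
apply: (le_trans (ler_norm_sum _ _ _)).
apply: (le_trans (y := \sum_(k < d) `|v| * e')).
  apply: ler_sum => k _; rewrite -mulrBr normrM ler_pM //.
    exact: entry_le_norm.
  exact: (Hc k).2.1.
rewrite sumr_const card_ord -mulr_natl /e' mulrA mulrA.
by rewrite ler_pdivrMr // mulrDr mulr1 [e * _]mulrC lerDl ltW.
Unshelve. all: by end_near.
Qed.
End L1.
Section W2.
Variables (R : realType) (d : nat).

Lemma W_exp m (u : nat -> 'rV[R]_d -> R) :
  (exists N, forall n, (N <= n)%N -> forall x, B x ->
      u n x <= 0 /\ forall j, derivable (u n) x (ev R j)) ->
  (forall j, W m (fun n => partial j (u n))) ->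
  W m.+1 (fun n x => expR (u n x)).
Proof.
move=> [N HN]; elim: m => [|m IH] Hp.
- have W0e : W0 (fun n x => expR (u n x)).
    exists 1, N => n hn x Bx; rewrite ger0_norm ?expR_ge0 //.
    by rewrite expR_le1; case: (HN n hn x Bx).
  split => //; split.
    exists N => n hn x Bx j; exact: (derive_exp ((HN n hn x Bx).2 j)).1.
  move=> j; have := W0_mul W0e (Hp j).
  apply: W0_ext; exists N => n hn x Bx.
  by rewrite /partial (derive_exp ((HN n hn x Bx).2 j)).2.
- have Wm : W m.+1 (fun n x => expR (u n x)).
    by apply: IH => j; apply: W_mono.
  split; first exact: W_W0 Wm.
  split.
    exists N => n hn x Bx j; exact: (derive_exp ((HN n hn x Bx).2 j)).1.
  move=> j; have := W_mul Wm (Hp j).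
  apply: W_ext; exists N => n hn x Bx.
  by rewrite /partial (derive_exp ((HN n hn x Bx).2 j)).2.
Qed.

Lemma entry_le_mnorm m n (M : 'M[R]_(m, n)) i j : `|M i j| <= `|M|.
Proof.
change (`|M|) with (mx_norm M); rewrite mx_normrE.
exact: (le_bigmax_cond _ (fun ij => `|M ij.1 ij.2|) (isT : predT (i, j))).
Qed.

Lemma mulmx_bound (x : 'rV[R]_d) (A : 'M[R]_d) : `|x| <= 1 -> `|x *m A| <= d%:R * `|A|.
Proof.
move=> hx; apply: norm_le_entries; first by rewrite mulr_ge0.
move=> j; rewrite mxE.
apply: (le_trans (ler_norm_sum _ _ _)).
apply: (le_trans (y := \sum_(i < d) `|A|)).
  apply: ler_sum => i _; rewrite normrM -[X in _ <= X]mul1r ler_pM //.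
    exact: le_trans (entry_le_norm _ _) hx.
  exact: entry_le_mnorm.
by rewrite sumr_const card_ord mulr_natl.
Qed.

Lemma derive_cmul (F : 'rV[R]_d -> R) (c : R) x v : derivable F x v ->
  derivable (fun y => c * F y) x v /\ 'D_v (fun y => c * F y) x = c * 'D_v F x.
Proof.
move=> dF; split; first exact: (@derivableZ R _ _ F c x v dF).
exact: (@deriveZ R _ _ F c x v dF).
Qed.

End W2.
Section Main.
Variables (R : realType) (d : nat) (Phi : 'rV[R]_d -> R) (xs : 'rV[R]_d)
  (A : 'M[R]_d) (kap : R) (U : set 'rV[R]_d).
Hypothesis Phi0 : forall x, 0 <= Phi x.
Hypothesis kap0 : 0 <= kap.
Hypothesis Uo : open U.
Hypothesis Uxs : U xs.
Hypothesis CkU : Ck (4 * d + 3) U Phi.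
Hypothesis grad0 : forall i, partial i Phi xs = 0.

Definition hh (n : nat) : R := Num.sqrt (kap / n%:R).
Definition gg n (x : 'rV[R]_d) := xs + hh n *: (x *m A).
Definition GG (s : seq 'I_d) n x := n%:R * hh n ^+ size s * iter_partial s Phi (gg n x).
Definition cA : R := d%:R * `|A|.

Lemma cA_ge0 : 0 <= cA.
Proof. by rewrite mulr_ge0. Qed.

Lemma hh_ge0 n : 0 <= hh n.
Proof. exact: sqrtr_ge0. Qed.

Lemma h_small (eps : R) : 0 < eps -> exists N, forall n, (N <= n)%N -> hh n <= eps.
Proof.
move=> e0; pose K := kap / eps ^+ 2.
have K0 : 0 <= K by rewrite divr_ge0 // exprn_ge0 // ltW.
exists (Num.bound K).+1 => n hn.
have n0 : (0 < n)%N by apply: leq_trans hn.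
have nK : K < n%:R.
  apply: (lt_le_trans (archi_boundP K0)); rewrite ler_nat; exact: ltnW.
rewrite /hh -(ger0_norm (ltW e0)) -sqrtr_sqr ler_sqrt ?exprn_ge0 ?ltW //.
rewrite ltr_pdivrMr ?ltr0n // mulrC -ltr_pdivrMr ?exprn_gt0 //.
Qed.

Lemma nh2 n : (0 < n)%N -> n%:R * hh n ^+ 2 = kap.
Proof.
move=> n0; rewrite /hh sqr_sqrtr ?divr_ge0 // mulrC divfK //.
by rewrite pnatr_eq0 -lt0n.
Qed.

Lemma r0_ex : exists2 r0 : R, 0 < r0 & forall y, `|y - xs| < r0 -> U y.
Proof.
have : nbhs xs U by apply: Uo.
move=> /nbhs_ballP [r r0 Hr]; exists r => // y hy; apply: Hr.
by rewrite mx_norm_ball /ball_ /= distrC.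
Qed.

Lemma g_bound n x : B x -> `|gg n x - xs| <= hh n * cA.
Proof.
move=> Bx; rewrite /gg addrC addKr normrZ ger0_norm ?hh_ge0 //.
by rewrite ler_pM ?hh_ge0 // mulmx_bound // ltW.
Qed.

Lemma g_close (eps : R) : 0 < eps -> exists N, forall n, (N <= n)%N ->
  hh n <= 1 /\ forall x, B x -> `|gg n x - xs| < eps.
Proof.
move=> e0; pose e' := Order.min 1 (eps / (cA + 1)).
have cA1 : 0 < cA + 1 by rewrite ltr_wpDl ?cA_ge0.
have e'0 : 0 < e' by rewrite lt_min ltr01 divr_gt0.
have [N HN] := h_small e'0; exists N => n hn; have := HN n hn.
rewrite le_min => /andP[h1 h2]; split => // x Bx.
apply: (le_lt_trans (g_bound n Bx)).
apply: (le_lt_trans (y := eps / (cA + 1) * cA)); first by rewrite ler_pM ?hh_ge0 ?cA_ge0.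
by rewrite mulrAC ltr_pdivrMr // ltr_pM2l // ltrDl.
Qed.

Lemma ev_mul j (M : 'M[R]_d) l : (ev R j *m M) 0 l = M j l.
Proof.
rewrite mxE (bigD1 j) //= big1 => [|k kj]; rewrite /ev mxE.
  by rewrite eqxx mul1r addr0.
by rewrite (negbTE kj) mul0r.
Qed.

Lemma L1U z : U z -> forall s, (size s < 4 * d + 3)%N -> forall w,
  is_derive z w (iter_partial s Phi) (\sum_l w 0 l * iter_partial (l :: s) Phi z).
Proof.
move=> Uz s hs w; apply: L1.
  have : nbhs z U by apply: Uo.
  by apply: filterS => z' Uz'; exact: (CkU s Uz').1.
by move=> l; exact: (CkU (l :: s) Uz).2.
Qed.

Lemma dcomp s (c : R) n x j : U (gg n x) -> (size s < 4 * d + 3)%N ->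
  derivable (fun y => c * iter_partial s Phi (gg n y)) x (ev R j) /\
  partial j (fun y => c * iter_partial s Phi (gg n y)) x =
    \sum_l c * hh n * A j l * iter_partial (l :: s) Phi (gg n x).
Proof.
move=> Uz hs.
have [d1 d2] := L1U Uz hs (hh n *: (ev R j *m A)).
have da : derivable (fun y => iter_partial s Phi (gg n y)) x (ev R j).
  by rewrite /gg; apply/derivable_aff.
have [e1 e2] := derive_cmul c da.
split => //; rewrite /partial e2 /gg derive_aff d2 mulr_sumr.
by apply: eq_bigr => l _; rewrite mxE ev_mul; ring.
Qed.

Lemma cont_bound s : (size s <= 4 * d + 3)%N ->
  \forall z \near xs, `|iter_partial s Phi z| <= `|iter_partial s Phi xs| + 1.
Proof.
move=> hs; have := (CkU s Uxs).2 hs.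
move=> /(@cvgrPdist_le _ _ _ _ (nbhs_filter xs)) /(_ 1 ltr01).
apply: filterS => z hz.
have e : iter_partial s Phi z = iter_partial s Phi xs - (iter_partial s Phi xs - iter_partial s Phi z) by ring.
by rewrite e (le_trans (ler_normB _ _)) // lerD2l.
Qed.

Lemma Lip i : exists L rho, 0 < rho /\ 0 <= L /\ forall y, `|y - xs| < rho ->
  `|partial i Phi y| <= L * `|y - xs|.
Proof.
pose M := \sum_(l < d) (`|iter_partial [:: l; i] Phi xs| + 1).
have H : \forall z \near xs, U z /\ forall l : 'I_d,
    `|iter_partial [:: l; i] Phi z| <= `|iter_partial [:: l; i] Phi xs| + 1.
  have HU : nbhs xs U by apply: Uo.
  have HB : \forall z \near xs, forall l : 'I_d,
    `|iter_partial [:: l; i] Phi z| <= `|iter_partial [:: l; i] Phi xs| + 1.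
    apply: (@filter_forall _ 'I_d (fun l z => `|iter_partial [:: l; i] Phi z| <= `|iter_partial [:: l; i] Phi xs| + 1) (nbhs xs) _) => l.
    by apply: cont_bound; rewrite /= addn3.
  by apply: filterS2 HU HB => z a b; split.
have [rho rho0 Hrho] := (nbhs_ballP _ _).1 H.
have Hr z : `|z - xs| < rho -> U z /\ forall l : 'I_d,
    `|iter_partial [:: l; i] Phi z| <= `|iter_partial [:: l; i] Phi xs| + 1.
  by move=> hz; apply: Hrho; rewrite mx_norm_ball /ball_ /= distrC.
exists M, rho; split => //; split.
  by apply: sumr_ge0 => l _; rewrite addr_ge0.
move=> y hy; pose w := y - xs.
pose D s := \sum_l w 0 l * iter_partial [:: l; i] Phi (s *: w + xs).
have pt s : `|s| <= `|1 : R| -> `|s *: w + xs - xs| < rho.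
  move=> hs; rewrite addrK normrZ (le_lt_trans _ hy) //.
  by rewrite -[X in _ <= X]mul1r ler_pM // -(normr1 R).
have s1 : (size [:: i] < 4 * d + 3)%N by rewrite addn3.
have [c [hc e]] := @LMVT R d (partial i Phi) xs w 1 D
  (fun s hs => L1U (Hr _ (pt s hs)).1 (s := [:: i]) s1 w).
move: e; rewrite scale1r /w subrK grad0 subr0 mulr1 => ->.
rewrite /D /M (le_trans (ler_norm_sum _ _ _)) // mulr_suml.
apply: ler_sum => l _; rewrite normrM mulrC ler_pM //.
  exact: (Hr _ (pt c hc)).2.
exact: entry_le_norm.
Qed.
Lemma W0G s : (0 < size s)%N -> (size s <= d)%N -> W0 (GG s).
Proof.
case: s => [//|i s] _ hs.
case: s hs => [|i2 s] hs.
- have [L [rho [rho0 [L0 HL]]]] := Lip i.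
  have [N HN] := g_close rho0.
  exists (kap * L * cA), (maxn N 1) => n; rewrite geq_max => /andP[hn n1] x Bx.
  have h1 := HL _ ((HN n hn).2 x Bx).
  rewrite /GG /= expr1 normrM ger0_norm ?mulr_ge0 ?hh_ge0 //.
  apply: (le_trans (y := n%:R * hh n * (L * (hh n * cA)))).
    rewrite ler_pM ?mulr_ge0 ?hh_ge0 //.
    by apply: (le_trans h1); rewrite ler_pM // g_bound.
  rewrite -(nh2 n1) le_eqVlt; apply/orP; left; apply/eqP; ring.
- set s' := [:: i, i2 & s].
  have hs' : (size s' <= 4 * d + 3)%N.
    apply: leq_trans hs _; rewrite -[X in (X <= _)%N]mul1n addn3.
    by apply: leqW; apply: leqW; apply: leqW; rewrite leq_mul2r orbT.
  have [rho rho0 Hrho] := (nbhs_ballP _ _).1 (cont_bound hs').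
  have [N HN] := g_close rho0.
  exists (kap * (`|iter_partial s' Phi xs| + 1)), (maxn N 1) => n.
  rewrite geq_max => /andP[hn n1] x Bx.
  have h1 : `|iter_partial s' Phi (gg n x)| <= `|iter_partial s' Phi xs| + 1.
    by apply: Hrho; rewrite mx_norm_ball /ball_ /= distrC (HN n hn).2.
  have hk : hh n ^+ size s' <= hh n ^+ 2.
    rewrite /= -addn2 exprD ler_piMl ?exprn_ge0 ?hh_ge0 //.
    by rewrite exprn_ile1 ?hh_ge0 ?(HN n hn).1.
  rewrite /GG normrM ger0_norm ?mulr_ge0 ?exprn_ge0 ?hh_ge0 //.
  rewrite -(nh2 n1); apply: ler_pM => //.
    by rewrite mulr_ge0 ?exprn_ge0 ?hh_ge0.
  by apply: ler_wpM2l.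
change (0 <= hh n ^+ (size s).+1); apply: exprn_ge0; exact: hh_ge0.
Qed.

Lemma WG m : forall s, (0 < size s)%N -> (size s + m <= d)%N -> W m (GG s).
Proof.
elim: m => [|m IH] s s0 hs.
  by apply: W0G; rewrite addn0 in hs.
have [r0 r00 Hr0] := r0_ex.
have [N HN] := g_close r00.
have hsd : (size s <= d)%N by apply: leq_trans hs; exact: leq_addr.
have hsz : (size s < 4 * d + 3)%N.
  rewrite addn3 ltnS; apply: leqW; apply: leqW; apply: leq_trans hsd _.
  by rewrite -[X in (X <= _)%N]mul1n leq_mul2r orbT.
split; first exact: W0G.
split.
  exists N => n hn x Bx j; rewrite /GG.
  exact: (dcomp _ _ (Hr0 _ ((HN n hn).2 x Bx)) hsz).1.
move=> j.
have W1 : W m (fun n x => \sum_l A j l * GG (l :: s) n x).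
  apply: W_sum => l; apply: (@W_mul R d m (fun _ _ => A j l) (GG (l :: s)) (W_cst _ _ _)).
  by apply: IH => //; rewrite /= addSn -addnS.
apply: W_ext W1; exists N => n hn x Bx.
rewrite /GG (dcomp _ _ (Hr0 _ ((HN n hn).2 x Bx)) hsz).2.
by apply: eq_bigr => l _ /=; rewrite exprSr; ring.
Qed.

Lemma WF m : (m <= d)%N -> W m (fun n x => expR (- (n%:R * Phi (gg n x)))).
Proof.
case: m => [|m] hm.
  exists 1, 0%N => n _ x _.
  by rewrite ger0_norm ?expR_ge0 // expR_le1 oppr_le0 mulr_ge0.
have [r0 r00 Hr0] := r0_ex.
have [N HN] := g_close r00.
have s0 : (size ([::] : seq 'I_d) < 4 * d + 3)%N by rewrite addn3.
have Hex : exists N, forall n, (N <= n)%N -> forall x, B x ->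
    - n%:R * Phi (gg n x) <= 0 /\ forall j, derivable (fun x => - n%:R * Phi (gg n x)) x (ev R j).
  exists N => n hn x Bx; split; first by rewrite mulNr oppr_le0 mulr_ge0.
  move=> j; exact: (@dcomp [::] (- n%:R) n x j (Hr0 _ ((HN n hn).2 x Bx)) s0).1.
have Hp : forall j, W m (fun n => partial j (fun x => - n%:R * Phi (gg n x))).
  move=> j.
  have W1 : W m (fun n x => \sum_l (- A j l) * GG [:: l] n x).
    apply: W_sum => l; apply: (@W_mul R d m (fun _ _ => - A j l) (GG [:: l]) (W_cst _ _ _)).
    by apply: WG.
  apply: W_ext W1; exists N => n hn x Bx.
  have := (@dcomp [::] (- n%:R) n x j (Hr0 _ ((HN n hn).2 x Bx)) s0).2.
  move=> ->.
  by apply: eq_bigr => l _ /=; rewrite /GG /= expr1; ring.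
have := @W_exp R d m (fun n x => - n%:R * Phi (gg n x)) Hex Hp.
apply: W_ext; exists 0%N => n _ x _; by rewrite mulNr.
Qed.
End Main.
Section Fermat.
Variables (R : realType) (d : nat).

Lemma norm_evZ (t : R) (i : 'I_d) : `|t *: ev R i| <= `|t|.
Proof.
apply: norm_le_entries => // j; rewrite !mxE.
by case: eqP => _; rewrite ?mulr1 ?mulr0 ?normr0.
Qed.

Lemma enorm_evZ (t : R) (i : 'I_d) : enorm (t *: ev R i) = `|t|.
Proof.
rewrite /enorm (bigD1 i) //= big1 => [|j ji]; last first.
  by rewrite !mxE (negbTE ji) mulr0 expr0n.
by rewrite !mxE eqxx mulr1 addr0 sqrtr_sqr.
Qed.

Lemma fermat (Phi : 'rV[R]_d -> R) (xs : 'rV[R]_d) (U : set 'rV[R]_d) k :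
  (0 < k)%N -> open U -> U xs -> Ck k U Phi ->
  (forall i, - (1/2) < xs 0 i < 1/2) ->
  (forall r : R, 0 < r -> exists c : R, 0 < c /\
     forall x : 'rV[R]_d, (forall i, - (1/2) <= x 0 i <= 1/2) ->
       r < enorm (x - xs) -> c <= Phi x - Phi xs) ->
  forall i, partial i Phi xs = 0.
Proof.
move=> k0 Uo Uxs CkU Hxs Hmin i.
have [r r0 Hr] : exists2 r : R, 0 < r & forall y, `|y - xs| < r -> U y.
  have : nbhs xs U by apply: Uo.
  move=> /nbhs_ballP [r r0 Hr]; exists r => // y hy; apply: Hr.
  by rewrite mx_norm_ball /ball_ /= distrC.
have [xl xu] := andP (Hxs i).
pose m := Order.min (1/2 - xs 0 i) (xs 0 i + 1/2).
have m0 : 0 < m by rewrite lt_min subr_gt0 xu /= -ltrBlDr sub0r xl.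
pose del := Order.min r m.
have del0 : 0 < del by rewrite lt_min r0 m0.
pose phi := fun t : R => Phi (t *: ev R i + xs).
rewrite /partial derive_line0.
have H : is_derive (0 : R) (1 : R) phi 0.
  apply: (@derive1_at_min R phi (- del) del 0).
  - by move: del0 => /= D0; lra.
  - move=> t; rewrite in_itv /= => /andP[t1 t2].
    have Ux : U (t *: ev R i + xs).
      apply: Hr; rewrite addrK (le_lt_trans (norm_evZ _ _)) //.
      rewrite (lt_le_trans (y := del)) ?ge_min ?lexx //.
      by rewrite ltr_norml t1 t2.
    apply/derivable_line; exact: ((CkU [::] _ Ux).1 k0 i).
  - by rewrite in_itv /= oppr_lt0 del0.
  - move=> t; rewrite in_itv /= => /andP[t1 t2].
    rewrite /phi scale0r add0r.
    have [->|tn0] := eqVneq t 0; first by rewrite scale0r add0r.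
    have t20 : 0 < `|t| / 2 by rewrite divr_gt0 ?normr_gt0.
    have [c [c0 Hc]] := Hmin (`|t| / 2) t20.
    have td : `|t| < del by rewrite ltr_norml t1 t2.
    have tm : `|t| < m.
      by apply: (lt_le_trans td); rewrite ge_min lexx orbT.
    have : c <= Phi (t *: ev R i + xs) - Phi xs.
      apply: Hc.
        move=> j; rewrite !mxE; have [->|ji] := eqVneq j i.
          rewrite ?eqxx mulr1; move: tm; rewrite lt_min => /andP[a b].
          have h1 := ler_norm t; have h2 : - `|t| <= t by rewrite lerNnormlW.
          by apply/andP; split; lra.
        rewrite mulr0 add0r; have [a b] := andP (Hxs j).
        by rewrite !ltW.
      rewrite addrK enorm_evZ ltr_pdivrMr // ltr_pMr ?normr_gt0 //.
      by rewrite ltr1n.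
    move=> h; rewrite -subr_ge0 (le_trans (ltW c0)) //.
have := @derive_val _ _ _ _ _ _ _ H.
by rewrite /phi.
Qed.
End Fermat.
Section Int.
Variable (R : realType).
Local Open Scope ereal_scope.
Import HBNNSimple.

Lemma ge0_int_bound (dd : measure_display) (T : measurableType dd) (mu : {measure set T -> \bar R}) (D : set T) (f : T -> \bar R) (M : R) :
  measurable D -> (forall x, D x -> 0 <= f x <= M%:E) ->
  \int[mu]_(x in D) f x <= M%:E * mu D.
Proof.
move=> mD fb.
have f0 : forall x, D x -> 0 <= f x by move=> x /fb /andP[].
rewrite ge0_integralE //.
apply: ge_ereal_sup => _ [h /= hle <-].
rewrite -integralT_nnsfun.
have hD : forall x, ~ D x -> h x = 0%R.
  move=> x nDx; apply/eqP; rewrite eq_le fun_ge0 andbT.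
  by have := hle x; rewrite patchE ifF ?lee_fin //; apply/negbTE/negP; rewrite inE.
have -> : \int[mu]_x (h x)%:E = \int[mu]_(x in D) (h x)%:E.
  rewrite [RHS]integral_mkcond; apply: eq_integral => x _; rewrite patchE.
  by case: ifPn => // xD; rewrite hD //; move: xD; rewrite notin_setE.
rewrite -integral_cst //.
apply: ge0_le_integral => //.
- by move=> x _; rewrite lee_fin fun_ge0.
- apply/measurable_EFinP; apply: measurable_funTS; exact: measurable_funP.
- move=> x Dx; apply: le_trans (hle x) _.
  rewrite patchE ifT; first by have /andP[] := fb x Dx.
  by rewrite inE.
Qed.

Lemma Rint_bound (g : R -> R) (M : R) : (0 <= M)%R ->
  (forall t, (- (1/2) <= t <= 1/2)%R -> (`|g t| <= M)%R) ->
  (`|Rintegral (@lebesgue_measure R) `[(- (1/2))%R, (1/2)%R]%classic g| <= M)%R.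
Proof.
move=> M0 Hg.
set D := `[(- (1/2))%R, (1/2)%R]%classic.
have mD : measurable D by exact: measurable_itv.
have muD : (@lebesgue_measure R) D = 1%:E.
  rewrite /D lebesgue_measure_itv /= lte_fin.
  have -> : (- (1/2) < 1/2 :> R)%R by lra.
  by rewrite -EFinB; congr EFin; lra.
have gD x : D x -> (- (1/2) <= x <= 1/2)%R.
  by rewrite /D /= in_itv /=.
have hp : \int[lebesgue_measure]_(x in D) ((EFin \o g)^\+ x) <= M%:E.
  rewrite -[X in _ <= X]mule1 -muD. apply: ge0_int_bound => // x Dx.
  rewrite funepos_ge0 /= funeposE /= ge_max; apply/andP; split; last by rewrite lee_fin.
  rewrite lee_fin; exact: le_trans (ler_norm _) (Hg x (gD x Dx)).
have hn : \int[lebesgue_measure]_(x in D) ((EFin \o g)^\- x) <= M%:E.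
  rewrite -[X in _ <= X]mule1 -muD. apply: ge0_int_bound => // x Dx.
  rewrite funeneg_ge0 /= funenegE /= ge_max; apply/andP; split; last by rewrite lee_fin.
  rewrite lee_fin; have := Hg x (gD x Dx); rewrite ler_norml => /andP[a b].
  by rewrite lerNl.
have p0 : 0 <= \int[lebesgue_measure]_(x in D) ((EFin \o g)^\+ x).
  by apply: integral_ge0 => x _; exact: funepos_ge0.
have n0 : 0 <= \int[lebesgue_measure]_(x in D) ((EFin \o g)^\- x).
  by apply: integral_ge0 => x _; exact: funeneg_ge0.
have fp : \int[lebesgue_measure]_(x in D) ((EFin \o g)^\+ x) \is a fin_num.
  by rewrite ge0_fin_numE // (le_lt_trans hp) // ltry.
have fn : \int[lebesgue_measure]_(x in D) ((EFin \o g)^\- x) \is a fin_num.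
  by rewrite ge0_fin_numE // (le_lt_trans hn) // ltry.
rewrite /Rintegral integralE.
move: hp hn p0 n0; rewrite -(fineK fp) -(fineK fn) -EFinB /= !lee_fin.
move=> hp hn p0 n0.
rewrite ler_norml; apply/andP; split; lra.
Qed.
End Int.
Section Cint.
Variables (R : realType) (d : nat).
Definition box (y : 'rV[R]_d) := forall i, - (1/2) <= y 0 i <= 1/2.

Lemma box_B y : box y -> B y.
Proof.
move=> hy; apply: (le_lt_trans (y := 1/2)).
  apply: norm_le_entries => // i; rewrite ler_norml; exact: hy.
lra.
Qed.

Lemma box0 : box 0.
Proof. by move=> i; rewrite mxE; apply/andP; split; lra. Qed.

Lemma cint_bound (s : seq 'I_d) (f : 'rV[R]_d -> R) (M : R) : 0 <= M ->
  (forall y, box y -> `|f y| <= M) -> forall x, box x -> `|cint s f x| <= M.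
Proof.
move=> M0 Hf; elim: s => [|j s IH] x bx /=; first exact: Hf.
apply: Rint_bound => // t ht; apply: IH => k; rewrite /upd mxE.
by case: ifP => _ //; exact: bx.
Qed.
End Cint.

Unset Implicit Arguments.
Theorem lemma5 (R : realType) (d : nat) (Phi : 'rV[R]_d -> R)
    (xs : 'rV[R]_d) (Q : 'M[R]_d) (lam : 'I_d -> R) (tau : R)
    (alpha : nat -> R) (beta : 'I_d -> R) :
  (forall x, 0 <= Phi x) ->
  (forall i, - (1/2) < xs 0 i < 1/2) ->
  (forall r : R, 0 < r -> exists c : R, 0 < c /\
     forall x : 'rV[R]_d, (forall i, - (1/2) <= x 0 i <= 1/2) ->
       r < enorm (x - xs) -> c <= Phi x - Phi xs) ->
  (exists U : set 'rV[R]_d, open U /\ U xs /\ Ck (4 * d + 3) U Phi) ->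
  (forall v : 'rV[R]_d, v != 0 -> 0 < (v *m hessian Phi xs *m v^T) 0 0) ->
  Ck d setT Phi ->
  Q^T *m Q = 1%:M ->
  (forall i, 0 < lam i) ->
  hessian Phi xs = Q *m diag_mx (\row_i lam i) *m Q^T ->
  0 < tau < 1 ->
  pod_weights alpha beta ->
  exists C : R, exists N : nat, forall n : nat, (N <= n)%N ->
    gamma_norm alpha beta
      (fun x : 'rV[R]_d =>
         expR (- (n%:R * Phi (xs + Num.sqrt (2 * `|ln tau| / n%:R) *:
                   (x *m diag_mx (\row_i (Num.sqrt (lam i))^-1) *m Q^T)))))
    <= C.
Proof.
move=> Phi0 Hxs Hmin [U [Uo [Uxs CkU]]] _ _ _ _ _ _ [_ [_ [alpha0 [beta0 _]]]].
pose kap : R := 2 * `|ln tau|.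
pose A := diag_mx (\row_i (Num.sqrt (lam i))^-1) *m Q^T.
have kap0 : 0 <= kap by rewrite mulr_ge0.
have k0 : (0 < 4 * d + 3)%N by rewrite addn3.
have grad0 := fermat k0 Uo Uxs CkU Hxs Hmin.
pose FS := fun (n : nat) (x : 'rV[R]_d) =>
         expR (- (n%:R * Phi (xs + Num.sqrt (2 * `|ln tau| / n%:R) *:
                   (x *m diag_mx (\row_i (Num.sqrt (lam i))^-1) *m Q^T)))).
have WS : W d FS.
  have := @WF R d Phi xs A kap U Phi0 kap0 Uo Uxs CkU grad0 d (leqnn d).
  by apply: W_ext; exists 0%N => n _ x _; rewrite /FS /gg /hh /A mulmxA.
have HC : forall nu : {set 'I_d}, exists CN : R * nat, forall n, (CN.2 <= n)%N ->
    forall x, B x -> `|iter_partial (enum nu) (FS n) x| <= CN.1.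
  move=> nu.
  have hs : (size (enum nu) <= d)%N.
    by rewrite -cardE -[X in (_ <= X)%N](card_ord d) max_card.
  have [C [N HN]] := W_iter WS hs.
  by exists (C, N).
have [CN HCN] := choice HC.
pose gam nu := (gammaw alpha beta nu)^-1.
have gam0 nu : 0 <= gam nu.
  rewrite invr_ge0 /gammaw ltW // mulr_gt0 //.
  by apply: prodr_gt0 => j _.
exists (Num.sqrt (\sum_(nu : {set 'I_d}) gam nu * `|(CN nu).1| ^+ 2)).
exists (\max_(nu : {set 'I_d}) (CN nu).2)%N => n hn.
rewrite /gamma_norm ler_sqrt; last first.
  by apply: sumr_ge0 => nu _; rewrite mulr_ge0 ?exprn_ge0.
apply: ler_sum => nu _; apply: ler_wpM2l; first exact: gam0.
have hN : ((CN nu).2 <= n)%N.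
  by apply: leq_trans hn; exact: (@leq_bigmax _ (fun nu => (CN nu).2) nu).
have b1 : forall y, box y -> `|iter_partial (enum nu) (FS n) y| <= `|(CN nu).1|.
  move=> y /box_B By; apply: le_trans (HCN nu n hN y By) _; exact: ler_norm.
have b2 : forall y, box y -> `|cint (enum (~: nu)) (iter_partial (enum nu) (FS n)) y| <= `|(CN nu).1|.
  by move=> y; apply: cint_bound.
apply: le_trans (ler_norm _) _.
apply: (@cint_bound R d _ _ (`|(CN nu).1| ^+ 2)).
- exact: exprn_ge0.
- move=> y /b2 hy; rewrite normrX; apply: lerXn2r => //; rewrite nnegrE //.
- exact: box0.
Qed.
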